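(* Let $F:\mathcal{P}(V,A)\to S_2(A)$ be a weakly viable, reducible consular election rule satisfying SPP and SPO. Then $F$ is Marian if and only if its range graph $\mathcal{G}(F)$ is acyclic.
   Context: $V$ is a finite nonempty set of voters, $A$ a finite set of alternatives; a profile $P$ assigns to each voter $i$ a linear order $P_i$ on $A$; $P_i'P_{-i}$ replaces voter $i$'s order by $P_i'$; $P|_B$ is the profile of restrictions to $B\subseteq A$. $S_2(A)$ is the set of 2-element subsets of $A$; a consular election rule is a map $F:\mathcal{P}(V,A)\to S_2(A)$. SPO: for all $P$, $i$, $P_i'$, $\mathrm{best}(P_i,F(P))\succeq_i\mathrm{best}(P_i,F(P_i'P_{-i}))$; SPP: same with $\mathrm{worst}$, where $\mathrm{best}(P_i,W)$, $\mathrm{worst}(P_i,W)$ are the $P_i$-best and $P_i$-worst elements of $W$. Weakly viable: every $a\in A$ lies in $F(P)$ for some $P$. $F$ is reducible if there is a partition $A=B\uplus C$ and social choice functions $G:\mathcal{P}(V,B)\to B$, $H:\mathcal{P}(V,C)\to C$ with $F(P)=\{G(P|_B),H(P|_C)\}$ for all $P$. $F$ is Marian if some $m\in A$ lies in $F(P)$ for every profile $P$. The range graph $\mathcal{G}(F)$ has vertex set $A$ and edge set equal to the range of $F$. *)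

(* Defs.v *)
From mathcomp Require Import all_boot.
Set Implicit Arguments. Unset Strict Implicit. Unset Printing Implicit Defensive.

(* A (strict) linear order on a finite type T, as a boolean relation:
   R x y means "x is strictly preferred to y". *)
Definition linear_order (T : finType) (R : rel T) : Prop :=
  irreflexive R /\ transitive R /\ (forall x y, x != y -> R x y || R y x).

Definition profile (V T : finType) (P : V -> rel T) : Prop :=
  forall i, linear_order (P i).

Definition update (V T : finType) (P : V -> rel T) (i : V) (Ri : rel T)
  : V -> rel T := fun j => if j == i then Ri else P j.

Definition subalt (A : finType) (B : {set A}) : finType := {x : A | x \in B}.

Definition restrict (V A : finType) (B : {set A}) (P : V -> rel A)
  : V -> rel (subalt B) := fun i x y => P i (val x) (val y).

Arguments restrict {V A} B P _ _ _.

Definition weakpref (T : finType) (R : rel T) (x y : T) : bool :=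
  (x == y) || R x y.

Definition is_best (T : finType) (R : rel T) (W : {set T}) (x : T) : Prop :=
  x \in W /\ forall y, y \in W -> weakpref R x y.
Definition is_worst (T : finType) (R : rel T) (W : {set T}) (x : T) : Prop :=
  x \in W /\ forall y, y \in W -> weakpref R y x.

Definition consular (V A : finType) (F : (V -> rel A) -> {set A}) : Prop :=
  forall P, profile P -> #|F P| = 2.

Definition SPO (V A : finType) (F : (V -> rel A) -> {set A}) : Prop :=
  forall P i Ri, profile P -> linear_order Ri ->
    forall x y, is_best (P i) (F P) x -> is_best (P i) (F (update P i Ri)) y ->
      weakpref (P i) x y.

Definition SPP (V A : finType) (F : (V -> rel A) -> {set A}) : Prop :=
  forall P i Ri, profile P -> linear_order Ri ->
    forall x y, is_worst (P i) (F P) x -> is_worst (P i) (F (update P i Ri)) y ->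
      weakpref (P i) x y.

Definition weakly_viable (V A : finType) (F : (V -> rel A) -> {set A}) : Prop :=
  forall a, exists P, profile P /\ a \in F P.

Definition reducible (V A : finType) (F : (V -> rel A) -> {set A}) : Prop :=
  exists (B C : {set A}),
    [/\ [disjoint B & C], B :|: C = setT &
    exists (G : (V -> rel (subalt B)) -> subalt B)
           (H : (V -> rel (subalt C)) -> subalt C),
      forall P, profile P ->
        F P = [set val (G (restrict B P)); val (H (restrict C P))]].

Definition marian (V A : finType) (F : (V -> rel A) -> {set A}) : Prop :=
  exists m, forall P, profile P -> m \in F P.

Definition range_edge (V A : finType) (F : (V -> rel A) -> {set A}) (x y : A)
  : Prop := exists P, profile P /\ F P = [set x; y].

(* A cycle: a sequence of at least 3 pairwise distinct vertices, consecutive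
   ones (cyclically) adjacent. *)
Definition has_cycle (V A : finType) (F : (V -> rel A) -> {set A}) : Prop :=
  exists (x : A) (t : seq A),
    [/\ uniq (x :: t), 2 <= size t &
      forall k, k < size (x :: t) ->
        range_edge F (nth x (x :: t) k) (nth x (x :: t) (k.+1 %% size (x :: t)))].

Definition acyclic_range (V A : finType) (F : (V -> rel A) -> {set A}) : Prop :=
  ~ has_cycle F.

(* Main.v *)
Require Import Defs.
From mathcomp Require Import all_boot zify.
From Stdlib Require Import FunctionalExtensionality.
Set Implicit Arguments. Unset Strict Implicit.

Definition comb (V A : finType) (B : {set A}) (P1 P2 : V -> rel A) : V -> rel A :=
  fun i x y => if (x \in B) && (y \in B) then P1 i x y
    else if (x \notin B) && (y \notin B) then P2 i x y
    else (x \in B) && (y \notin B).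

Lemma comb_profile (V A : finType) (B : {set A}) (P1 P2 : V -> rel A) :
  profile P1 -> profile P2 -> profile (comb B P1 P2).
Proof.
move=> h1 h2 i; have [i1 [t1 o1]] := h1 i; have [i2 [t2 o2]] := h2 i.
split; [|split].
- move=> x; rewrite /comb; case: (x \in B) => /=; [exact: i1 | exact: i2].
- move=> y x z; rewrite /comb.
  case hx: (x \in B); case hy: (y \in B); case hz: (z \in B) => //=; try exact: t1; try exact: t2.
- move=> x y nxy; rewrite /comb.
  case hx: (x \in B); case hy: (y \in B) => //=; [exact: o1 | exact: o2].
Qed.

Lemma edges_all (V A : finType) (F : (V -> rel A) -> {set A}) (B C : {set A})
  (G : (V -> rel (subalt B)) -> subalt B) (H : (V -> rel (subalt C)) -> subalt C) :
  [disjoint B & C] -> B :|: C = setT ->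
  (forall P, profile P -> F P = [set val (G (restrict B P)); val (H (restrict C P))]) ->
  weakly_viable F ->
  forall b c, b \in B -> c \in C -> range_edge F b c.
Proof.
move=> dis cov hF wv b c bB cC.
have [P1 [p1 bin]] := wv b; have [P2 [p2 cin]] := wv c.
have e1 : b = val (G (restrict B P1)).
  move: bin; rewrite hF // !inE => /orP[/eqP //|/eqP e].
  by move: (valP (H (restrict C P1))); rewrite -e (disjointFr dis bB).
have e2 : c = val (H (restrict C P2)).
  move: cin; rewrite hF // !inE => /orP[/eqP e|/eqP //].
  by move: (valP (G (restrict B P2))); rewrite -e (disjointFl dis cC).
exists (comb B P1 P2); split; first exact: comb_profile.
rewrite hF; last exact: comb_profile.
have -> : restrict B (comb B P1 P2) = restrict B P1.
  apply: functional_extensionality => i; apply: functional_extensionality => x;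
  apply: functional_extensionality => y.
  by rewrite /restrict /comb (valP x) (valP y).
have -> : restrict C (comb B P1 P2) = restrict C P2.
  apply: functional_extensionality => i; apply: functional_extensionality => x;
  apply: functional_extensionality => y.
  by rewrite /restrict /comb (disjointFl dis (valP x)) (disjointFl dis (valP y)).
by rewrite -e1 -e2.
Qed.

Lemma modS j n : j < n -> j.+1 %% n = (if j.+1 == n then 0 else j.+1).
Proof.
move=> h; case: eqP => [->|ne]; first by rewrite modnn.
by rewrite modn_small //; lia.
Qed.
Lemma ar1 j n : j < n -> 2 < n -> j = j.+1 %% n -> False.
Proof. move=> h h2; rewrite modS //; case: eqP; lia. Qed.
Lemma ar2 j n : j < n -> 2 < n -> j = (j.+1 %% n).+1 %% n -> False.
Proof.
move=> h h2; rewrite (@modS j n h); case: eqP => e.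
  rewrite modS; [case: eqP|]; lia.
rewrite modS; [case: eqP|]; lia.
Qed.

Lemma range_edge_sym (V A : finType) (F : (V -> rel A) -> {set A}) x y :
  range_edge F x y -> range_edge F y x.
Proof. by move=> [P [p e]]; exists P; split=> //; rewrite e setUC. Qed.

Theorem corollary30 (V A : finType) (F : (V -> rel A) -> {set A}) :
  0 < #|V| ->
  consular F -> weakly_viable F -> reducible F -> SPP F -> SPO F ->
  (marian F <-> acyclic_range F).
Proof.
move=> _ _ wv [B [C [dis cov [G [H hF]]]]] _ _; split.
- move=> [m hm] [x [t [u sz he]]].
  set s := x :: t in u he.
  have n3 : 2 < size s by rewrite /s /=.
  have key : forall k, k < size s ->
      m = nth x s k \/ m = nth x s (k.+1 %% size s).
    move=> k kl; have [P [pP e]] := he k kl.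
    by move: (hm P pP); rewrite e !inE => /orP[/eqP|/eqP]; [left|right].
  case ms: (m \in s).
  + have jl : index m s < size s by rewrite index_mem.
    have kl : (index m s).+1 %% size s < size s by rewrite ltn_pmod //; lia.
    have k2l : ((index m s).+1 %% size s).+1 %% size s < size s
      by rewrite ltn_pmod //; lia.
    case: (key _ kl) => e.
    * have := index_uniq x kl u; rewrite -e => h.
      exact: (ar1 jl n3 h).
    * have := index_uniq x k2l u; rewrite -e => h.
      exact: (ar2 jl n3 h).
  + have l0 : 0 < size s by [].
    case: (key 0 l0) => e.
    * by move: ms; rewrite e mem_nth.
    * by move: ms; rewrite e mem_nth // ltn_pmod.
- move=> acy.
  have bB : val (G (fun _ _ _ => false)) \in B := valP _.
  have cC : val (H (fun _ _ _ => false)) \in C := valP _.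
  case: (leqP #|B| 1) => [/card_le1P hB | gB].
    exists (val (G (fun _ _ _ => false))) => P pP.
    rewrite hF // !inE; apply/orP; left.
    have hv : val (G (restrict B P)) \in B := valP _.
    by move: (hB _ bB (val (G (restrict B P)))); rewrite hv inE eq_sym => /esym.
  case: (leqP #|C| 1) => [/card_le1P hC | gC].
    exists (val (H (fun _ _ _ => false))) => P pP.
    rewrite hF // !inE; apply/orP; right.
    have hv : val (H (restrict C P)) \in C := valP _.
    by move: (hC _ cC (val (H (restrict C P)))); rewrite hv inE eq_sym => /esym.
  exfalso; apply: acy.
  have [b1 [b2 [b1B b2B nb]]] := card_gt1P gB.
  have [c1 [c2 [c1C c2C nc]]] := card_gt1P gC.
  have E := edges_all dis cov hF wv.
  have d : forall b c, b \in B -> c \in C -> b != c.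
    by move=> b c hb hc; apply/eqP => e; move: hc; rewrite -e (disjointFr dis hb).
  exists b1, [:: c1; b2; c2]; split => //.
  + have h1 := d _ _ b1B c1C; have h2 := d _ _ b1B c2C.
    have h3 := d _ _ b2B c2C; have h4 : c1 != b2 by rewrite eq_sym d.
    by rewrite /= !inE !negb_or nb nc h1 h2 h3 h4.
  + case=> [|[|[|[|k]]]] /= kl;
      first [ by [] | exact: (E _ _ b1B c1C) | exact: range_edge_sym (E _ _ b2B c1C)
            | exact: (E _ _ b2B c2C) | exact: range_edge_sym (E _ _ b1B c2C) ].
Qed.
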